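(* Let $t\ge3$ and let $p_1,\dots,p_t$ be distinct primes, $n=p_1p_2\cdots p_t$. Then $i(X_n)\le 4p_1p_2\cdots p_{t-3}$ (the empty product being $1$ when $t=3$).
   Context: $X_n$ is the graph on $\{0,\dots,n-1\}$ with $a,b$ adjacent iff $\gcd(a-b,n)=1$. $i(G)$ is the minimum size of a maximal (under inclusion) independent set of $G$. *)

(* Defs.v *)
From mathcomp Require Import all_boot.
Set Implicit Arguments. Unset Strict Implicit. Unset Printing Implicit Defensive.

(* The graph X_n on {0,...,n-1}: a, b adjacent iff gcd(a - b, n) = 1,
   where |a - b| is used (gcd is sign-insensitive; gcd(0,n) = n). *)
Definition absdiff (a b : nat) : nat := if a <= b then b - a else a - b.

Definition Xadj (n : nat) (a b : 'I_n) : bool := coprime (absdiff a b) n.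

Definition Xindep (n : nat) (S : {set 'I_n}) : bool :=
  [forall x in S, forall y in S, ~~ Xadj x y].

Definition Xmaxindep (n : nat) (S : {set 'I_n}) : bool :=
  maxset (@Xindep n) S.

(* i(X_n): minimum size of a maximal independent set (n is an upper bound,
   attained only vacuously; maximal independent sets always exist). *)
Definition iX (n : nat) : nat :=
  \big[minn/n]_(S : {set 'I_n} | Xmaxindep S) #|S|.

(* Main.v *)
Require Import Defs.
From mathcomp Require Import all_boot zify.
Set Implicit Arguments. Unset Strict Implicit. Unset Printing Implicit Defensive.

Lemma absdiff_cop a b d : prime d -> coprime (absdiff a b) d = (a %% d != b %% d).
Proof.
move=> pd; rewrite coprime_sym prime_coprime // /absdiff.
case: leqP => h; first by rewrite -eqn_mod_dvd // eq_sym.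
by rewrite -eqn_mod_dvd ?(ltnW h).
Qed.

Lemma bigmin_le_seq (T : eqType) (s : seq T) (P : pred T) (F : T -> nat) n0 x :
  x \in s -> P x -> \big[minn/n0]_(i <- s | P i) F i <= F x.
Proof.
elim: s => //= y s IH; rewrite inE big_cons => /orP [/eqP <- ->|xs Px].
  exact: geq_minl.
case: (P y); last exact: IH.
exact: leq_trans (geq_minr _ _) (IH xs Px).
Qed.

Lemma T_agree a b c a' b' c' : a < 2 -> b < 2 -> c < 2 -> ~~ odd (a + b + c) ->
  a' < 2 -> b' < 2 -> c' < 2 -> ~~ odd (a' + b' + c') ->
  [|| a == a', b == b' | c == c'].
Proof.
by case: a => [|[|]] // ; case: b => [|[|]] //; case: c => [|[|]] //;
   case: a' => [|[|]] // ; case: b' => [|[|]] //; case: c' => [|[|]].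
Qed.

Lemma T_diff a b c : ~~ [&& a < 2, b < 2, c < 2 & ~~ odd (a + b + c)] ->
  exists a' b' c', [/\ [&& a' < 2, b' < 2, c' < 2 & ~~ odd (a' + b' + c')],
     a' != a, b' != b & c' != c].
Proof.
move: a b c => [|[|a]] [|[|b]] [|[|c]] //= _;
 first [ by exists 0, 0, 0 | by exists 0, 1, 1 | by exists 1, 0, 1 | by exists 1, 1, 0].
Qed.

Lemma T_par a b c : c < 2 -> ~~ odd (a + b + c) -> c = odd (a + b).
Proof. by case: c => [|[|]] //; rewrite ?addn0 ?addn1 /=; case: odd. Qed.

Lemma mod_dvd_eq d M a b : d %| M -> a = b %[mod M] -> a = b %[mod d].
Proof. by move=> dM E; rewrite -(modn_dvdm a dM) E modn_dvdm. Qed.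

Lemma split3 k (F : 'I_k.+3 -> nat) : \prod_(i < k.+3) F i =
  (\prod_(i < k.+3 | i < k) F i) * (F (inord k) * F (inord k.+1) * F (inord k.+2)).
Proof.
rewrite (bigID (fun i : 'I_k.+3 => i < k)) /=; congr (_ * _).
rewrite big_mkcond !big_ord_recr /= big1 => [|i _]; last by rewrite /= ltn_ord.
rewrite ltnn ltnNge leqnSn ltnNge ltnW //= mul1n.
congr (_ * _ * _); congr F; apply: val_inj; rewrite /= inordK //; lia.
Qed.

Lemma three_cases k j : k <= j -> j < k.+3 -> j = k \/ j = k.+1 \/ j = k.+2.
Proof. lia. Qed.

Lemma enc_lt d a b m : a < 2 -> b < 2 -> d < m -> d * 4 + a * 2 + b < 4 * m.
Proof. lia. Qed.

Lemma enc_inj d1 d2 a1 a2 b1 b2 : a1 < 2 -> b1 < 2 -> a2 < 2 -> b2 < 2 ->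
  d1 * 4 + a1 * 2 + b1 = d2 * 4 + a2 * 2 + b2 -> [/\ d1 = d2, a1 = a2 & b1 = b2].
Proof. move=> *; split; lia. Qed.

Theorem theorem4p10 (t : nat) (p : 'I_t -> nat) (n : nat) :
  3 <= t ->
  (forall i, prime (p i)) ->
  injective p ->
  n = \prod_(i < t) p i ->
  iX n <= 4 * \prod_(i < t | i < t - 3) p i.
Proof.
move=> t3; case: t t3 p => [|[|[|k]]] // _ p Pp injp En.
have -> : k.+3 - 3 = k by lia.
set m := \prod_(i < k.+3 | i < k) p i.
set i1 : 'I_k.+3 := inord k.
set i2 : 'I_k.+3 := inord k.+1.
set i3 : 'I_k.+3 := inord k.+2.
have v1 : val i1 = k by rewrite /i1 /= inordK //; lia.
have v2 : val i2 = k.+1 by rewrite /i2 /= inordK //; lia.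
have v3 : val i3 = k.+2 by rewrite /i3 /= inordK //; lia.
set q := p i1; set r := p i2; set s := p i3.
have Enm : n = m * (q * r * s) by rewrite En split3.
have cop_ij : forall i j, i != j -> coprime (p i) (p j).
  move=> i j ij; rewrite prime_coprime // dvdn_prime2 //.
  by apply/eqP => /injp /eqP; apply/negP.
have cop_m : forall j : 'I_k.+3, k <= j -> coprime (p j) m.
  move=> j kj; rewrite /m; elim/big_ind: _ => [|x y|i ik]; first exact: coprimen1.
    by rewrite coprimeMr => -> ->. apply: cop_ij; apply/eqP => E; move: ik; rewrite -E; lia.
have dvd_n : forall i, p i %| n.
  by move=> i; rewrite En (bigD1 i) //= dvdn_mulr.
have dvd_m : forall i : 'I_k.+3, i < k -> p i %| m.
  by move=> i ik; rewrite /m (bigD1 i) //= dvdn_mulr.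
have n_cop : forall D, (forall i, coprime D (p i)) -> coprime D n.
  move=> D H; rewrite En; elim/big_ind: _ => [|x y|i _ //]; first exact: coprimen1.
  by rewrite coprimeMr => -> ->.
have n_gt0 : 0 < n by rewrite En prodn_gt0 // => i; exact: prime_gt0.
have m_gt0 : 0 < m by rewrite prodn_gt0 // => i; exact: prime_gt0.
have ne12 : i1 != i2 by rewrite -val_eqE v1 v2; lia.
have ne13 : i1 != i3 by rewrite -val_eqE v1 v3; lia.
have ne23 : i2 != i3 by rewrite -val_eqE v2 v3; lia.
have Pq := Pp i1; have Pr := Pp i2; have Ps := Pp i3.
have q2 := prime_gt1 Pq; have r2 := prime_gt1 Pr; have s2 := prime_gt1 Ps.
pose inS (x : nat) := [&& x %% q < 2, x %% r < 2, x %% s < 2 & ~~ odd (x %% q + x %% r + x %% s)].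
pose S := [set x : 'I_n | inS x].
have indepS : Xindep S.
  apply/forallP => x; apply/implyP; rewrite inE => Sx.
  apply/forallP => y; apply/implyP; rewrite inE => Sy.
  rewrite /Xadj; apply/negP => C.
  move: Sx Sy => /and4P[a1 b1 c1 o1] /and4P[a2 b2 c2 o2].
  have := T_agree a1 b1 c1 o1 a2 b2 c2 o2 => /or3P [] /eqP E.
  - by have := coprime_dvdr (dvd_n i1) C; rewrite absdiff_cop // E eqxx.
  - by have := coprime_dvdr (dvd_n i2) C; rewrite absdiff_cop // E eqxx.
  - by have := coprime_dvdr (dvd_n i3) C; rewrite absdiff_cop // E eqxx.
have maxS : Xmaxindep S.
  apply/maxsetP; split => // B indB sSB.
  apply/eqP; rewrite eqEsubset sSB andbT; apply/subsetP => y yB.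
  rewrite inE; apply/negPn/negP => ny.
  have [a' [b' [c' [Ta na nb nc]]]] := T_diff ny.
  have Ta' := Ta; move/and4P: Ta' => [ha hb hc _].
  pose z1 := chinese m q y.+1 a'.
  pose z2 := chinese (m * q) r z1 b'.
  pose z3 := chinese (m * q * r) s z2 c'.
  have cmq : coprime m q by rewrite coprime_sym; apply: cop_m; rewrite v1.
  have cmqr : coprime (m * q) r.
    rewrite coprimeMl; apply/andP; split; last exact: cop_ij.
    by rewrite coprime_sym; apply: cop_m; rewrite v2.
  have cmqrs : coprime (m * q * r) s.
    rewrite !coprimeMl -andbA; apply/and3P; split; last exact: cop_ij.
      by rewrite coprime_sym; apply: cop_m; rewrite v3; exact: leqW (leqnSn k).
    exact: cop_ij.
  have xs : z3 %% s = c' by rewrite /z3 chinese_modr // modn_small //; exact: leq_trans hc s2.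
  have xr : z3 %% r = b'.
    rewrite (mod_dvd_eq (dvdn_mull _ (dvdnn r)) (chinese_modl cmqrs _ _)).
    by rewrite /z2 chinese_modr // modn_small //; exact: leq_trans hb r2.
  have xq : z3 %% q = a'.
    rewrite (mod_dvd_eq (dvdn_mulr _ (dvdn_mull _ (dvdnn q))) (chinese_modl cmqrs _ _)).
    rewrite (mod_dvd_eq (dvdn_mull _ (dvdnn q)) (chinese_modl cmqr _ _)).
    by rewrite /z1 chinese_modr // modn_small //; exact: leq_trans ha q2.
  have xm : forall i : 'I_k.+3, i < k -> z3 %% p i = y.+1 %% p i.
    move=> i ik.
    rewrite (mod_dvd_eq (dvdn_mulr _ (dvdn_mulr _ (dvd_m i ik))) (chinese_modl cmqrs _ _)).
    rewrite (mod_dvd_eq (dvdn_mulr _ (dvd_m i ik)) (chinese_modl cmqr _ _)).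
    by rewrite (mod_dvd_eq (dvd_m i ik) (chinese_modl cmq _ _)).
  pose x : 'I_n := Ordinal (ltn_pmod z3 n_gt0).
  have xmod : forall d, d %| n -> x %% d = z3 %% d by move=> d dn; rewrite /= modn_dvdm.
  have Sx : x \in S.
    by rewrite inE /inS (xmod q (dvd_n i1)) (xmod r (dvd_n i2)) (xmod s (dvd_n i3)) xq xr xs.
  have xB : x \in B := subsetP sSB x Sx.
  move/forallP: indB => /(_ x)/implyP/(_ xB)/forallP/(_ y)/implyP/(_ yB)/negP; apply.
  rewrite /Xadj; apply: n_cop => i.
  rewrite absdiff_cop // xmod //.
  case: (ltnP i k) => ik.
    rewrite xm //; apply/negP; rewrite eqn_mod_dvd ?leqnSn // subSnn dvdn1 => /eqP pi1.
    by have := prime_gt1 (Pp i); rewrite pi1.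
  have : val i = val i1 \/ val i = val i2 \/ val i = val i3.
    by rewrite v1 v2 v3; apply: three_cases ik (ltn_ord i).
  case=> [|[]] /val_inj ->.
  - by rewrite -/q xq.
  - by rewrite -/r xr.
  - by rewrite -/s xs.
have cardS : #|S| <= 4 * m.
  pose Q := q * r * s.
  have Q_gt0 : 0 < Q by rewrite /Q !muln_gt0 !prime_gt0.
  pose enc (x : nat) := (x %/ Q) * 4 + (x %% q) * 2 + x %% r.
  have m4 : 0 < 4 * m by rewrite muln_gt0 m_gt0.
  pose i0 : 'I_(4 * m) := Ordinal m4.
  pose f (x : 'I_n) := insubd i0 (enc x).
  have encS : forall x : 'I_n, x \in S -> enc x < 4 * m.
    move=> x; rewrite inE => /and4P[ha hb _ _].
    have h : x %/ Q < m by rewrite ltn_divLR // -Enm ltn_ord.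
    exact: enc_lt.
  rewrite -[4 * m]card_ord; apply: (@leq_card_in _ _ f) => x y xS yS /(congr1 val).
  rewrite !val_insubd (encS x xS) (encS y yS) => E.
  move: xS yS; rewrite !inE => /and4P[xa xb xc xo] /and4P[ya yb yc yo].
  have [Ed Ea Eb] : [/\ x %/ Q = y %/ Q, x %% q = y %% q & x %% r = y %% r].
    exact: enc_inj E.
  have Ec : x %% s = y %% s by rewrite (T_par xc xo) (T_par yc yo) Ea Eb.
  have cqr : coprime q r by apply: cop_ij.
  have cqrs : coprime (q * r) s.
    by rewrite coprimeMl; apply/andP; split; apply: cop_ij.
  have EQ : x %% Q = y %% Q.
    by apply/eqP; rewrite /Q chinese_remainder // chinese_remainder // Ea Eb Ec !eqxx.
  by apply: val_inj; rewrite /= (divn_eq x Q) (divn_eq y Q) Ed EQ.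
apply: leq_trans cardS.
exact: bigmin_le_seq (mem_index_enum _) maxS.
Qed.
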